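(* Let $n\in\mathbb N$ and let $\mu$ be any probability measure on $[n]=\{1,\dots,n\}$. Fix $q,z\in\mathbb N$ with $z\ge 2n^{1-1/q}$. Let $x_1,\dots,x_{qz}$ be chosen independently at random according to $\mu$. Then $$\Pr\Big(\exists\, i_1,\dots,i_q \text{ with } (j-1)z<i_j\le jz \text{ for each } j,\ x_{i_1}=x_{i_2}=\dots=x_{i_q}\Big)\ \ge\ 1-e^{-cz/n^{1-1/q}}$$ for any $c\le -\tfrac14\ln(1-2^{-q})$, and in particular for any $c\le 2^{-q-2}$. *)

(* Defs.v *)
From HB Require Import structures.
From mathcomp Require Import all_boot all_order all_algebra.
From mathcomp Require Import all_classical all_reals.
From mathcomp Require Import all_analysis.
Set Implicit Arguments. Unset Strict Implicit. Unset Printing Implicit Defensive.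
Import Order.TTheory GRing.Theory Num.Theory.
Local Open Scope ring_scope.

(* A probability measure on [n] = {0,...,n-1} (0-based indexing). *)
Definition is_prob_measure (R : realType) (n : nat) (mu : 'I_n -> R) : Prop :=
  (forall k, 0 <= mu k) /\ \sum_(k < n) mu k = 1.

(* The event: there exist i_1,...,i_q with i_j in the j-th block of length z
   (0-based: j*z <= i_j < (j+1)*z) and x_{i_1} = ... = x_{i_q}. *)
Definition block_collision (n q z : nat) (x : {ffun 'I_(q * z) -> 'I_n}) : bool :=
  [exists i : {ffun 'I_q -> 'I_(q * z)},
     [forall j : 'I_q, (j * z <= i j)%N && (i j < j.+1 * z)%N] &&
     [forall j : 'I_q, forall j' : 'I_q, x (i j) == x (i j')]].

Definition iid_prob (R : realType) (n m : nat) (mu : 'I_n -> R)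
    (E : pred {ffun 'I_m -> 'I_n}) : R :=
  \sum_(x : {ffun 'I_m -> 'I_n} | E x) \prod_(i < m) mu (x i).

(* Main.v *)
Require Import Defs.
From HB Require Import structures.
From mathcomp Require Import all_boot all_order all_algebra.
From mathcomp Require Import zify.
From mathcomp Require Import all_classical all_reals.
From mathcomp Require Import all_analysis.
From mathcomp Require Import ring lra.
Import Order.TTheory GRing.Theory Num.Theory.
Local Open Scope ring_scope.
Set Implicit Arguments. Unset Strict Implicit. Unset Printing Implicit Defensive.
Definition Wt (R : realType) (I T : finType) (mu : T -> R) (x : {ffun I -> T}) : R :=
  \prod_i mu (x i).
Definition Ex (R : realType) (I T : finType) (mu : T -> R) (h : {ffun I -> T} -> R) : R :=
  \sum_x Wt mu x * h x.
Definition mrg (I T : finType) (A : {set I}) (x y : {ffun I -> T}) : {ffun I -> T} :=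
  [ffun i => if i \in A then x i else y i].

Lemma Ex_prod (R : realType) (I T : finType) (mu : T -> R) (f : I -> T -> R) :
  Ex mu (fun x => \prod_i f i (x i)) = \prod_i \sum_t mu t * f i t.
Proof.
rewrite /Ex /Wt (bigA_distr_bigA (fun i t => mu t * f i t)).
by apply: eq_bigr => x _; rewrite big_split.
Qed.

Lemma sumWt (R : realType) (I T : finType) (mu : T -> R) :

  \sum_t mu t = 1 -> \sum_(x : {ffun I -> T}) Wt mu x = 1 :> R.
Proof.
move=> h1; have := Ex_prod (I:=I) mu (fun _ _ => 1); rewrite /Ex.
rewrite (eq_bigr (fun x => Wt mu x)) => [->|x _]; last by rewrite big1_eq mulr1.
by under eq_bigr do under eq_bigr do rewrite mulr1; rewrite h1 big1_eq.
Qed.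

Lemma Wt_mrg (R : realType) (I T : finType) (mu : T -> R) (A : {set I}) (x y : {ffun I -> T}) :
  Wt mu x * Wt mu y = Wt mu (mrg A x y) * Wt mu (mrg A y x).
Proof.
rewrite /Wt -!big_split; apply: eq_bigr => i _; rewrite !ffunE.
by case: (i \in A) => //; apply: mulrC.
Qed.

Lemma mrgK (I T : finType) (A : {set I}) (x y : {ffun I -> T}) :
  mrg A (mrg A x y) (mrg A y x) = x.
Proof. by apply/ffunP => i; rewrite !ffunE; case: (i \in A). Qed.

Lemma Ex_mrg (R : realType) (I T : finType) (mu : T -> R) (A : {set I}) (h : {ffun I -> T} -> R) :
  \sum_t mu t = 1 ->
  \sum_x \sum_y Wt mu x * Wt mu y * h (mrg A x y) = Ex mu h.
Proof.
move=> h1.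
under eq_bigr do under eq_bigr do rewrite (Wt_mrg mu A).
rewrite pair_bigA /=.
pose phi := fun p : {ffun I -> T} * {ffun I -> T} => (mrg A p.1 p.2, mrg A p.2 p.1).
have phiK : involutive phi by case=> x y; rewrite /phi /= !mrgK.
rewrite (reindex_inj (inv_inj phiK)) /=.
under eq_bigr do rewrite !mrgK.
rewrite -(pair_bigA _ (fun u v => Wt mu u * Wt mu v * h u)) /=.
rewrite /Ex; apply: eq_bigr => u _.
by rewrite -mulr_suml -mulr_sumr sumWt // mulr1.
Qed.

Definition depends (I T : finType) (R : Type) (f : {ffun I -> T} -> R) (A : {set I}) :=
  forall x y : {ffun I -> T}, (forall i, i \in A -> x i = y i) -> f x = f y.

Lemma indep2 (R : realType) (I T : finType) (mu : T -> R) (A : {set I})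
    (f g : {ffun I -> T} -> R) :
  \sum_t mu t = 1 -> depends f A -> depends g (~: A) ->
  Ex mu (fun x => f x * g x) = Ex mu f * Ex mu g.
Proof.
move=> h1 hf hg; rewrite -(@Ex_mrg R I T mu A) // /Ex mulr_suml; apply: eq_bigr => x _.
rewrite mulr_sumr; apply: eq_bigr => y _.
rewrite (hf (mrg A x y) x); last by move=> i iA; rewrite ffunE iA.
rewrite (hg (mrg A x y) y); last by move=> i; rewrite inE ffunE => /negbTE ->.
by rewrite mulrACA.
Qed.

Lemma indepN (R : realType) (I T : finType) (mu : T -> R) (J : eqType)
    (U : J -> {set I}) (f : J -> {ffun I -> T} -> R) :
  \sum_t mu t = 1 ->
  (forall r r' i, r != r' -> i \in U r -> i \in U r' -> False) ->
  (forall r, depends (f r) (U r)) ->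
  forall s : seq J, uniq s ->
  Ex mu (fun x => \prod_(r <- s) f r x) = \prod_(r <- s) Ex mu (f r).
Proof.
move=> h1 hdis hdep; elim=> [|a s IH] /=.
  by move=> _; rewrite big_nil /Ex; under eq_bigr do rewrite big_nil mulr1; rewrite sumWt.
case/andP=> ans us; rewrite big_cons -IH //.
under [X in Ex mu X = _]funext do rewrite big_cons.
apply: (indep2 (A := U a)) => //.
move=> x y hxy; rewrite big_seq_cond [RHS]big_seq_cond; apply: eq_bigr => r /andP[rs _].
apply: hdep => i iUr; apply: hxy; rewrite inE; apply/negP => iUa.
apply: (hdis r a i) => //; apply/eqP => ra; move: ans; rewrite -ra rs //.
Qed.

Lemma Ex_ext (R : realType) (I T : finType) (mu : T -> R) (h1 h2 : {ffun I -> T} -> R) :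
  (forall x, h1 x = h2 x) -> Ex mu h1 = Ex mu h2.
Proof. by move=> e; apply: eq_bigr => x _; rewrite e. Qed.

Lemma Wt_ge0 (R : realType) (I T : finType) (mu : T -> R) (x : {ffun I -> T}) :
  (forall t, 0 <= mu t) -> 0 <= Wt mu x.
Proof. by move=> h; apply: prodr_ge0. Qed.

Lemma Ex_le (R : realType) (I T : finType) (mu : T -> R) (h1 h2 : {ffun I -> T} -> R) :
  (forall t, 0 <= mu t) -> (forall x, h1 x <= h2 x) -> Ex mu h1 <= Ex mu h2.
Proof.
move=> h0 e; apply: ler_sum => x _; apply: ler_wpM2l; [exact: Wt_ge0|exact: e].
Qed.

Lemma Ex_add (R : realType) (I T : finType) (mu : T -> R) (h1 h2 : {ffun I -> T} -> R) :
  Ex mu (fun x => h1 x + h2 x) = Ex mu h1 + Ex mu h2.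
Proof. by rewrite /Ex -big_split; apply: eq_bigr => x _; rewrite mulrDr. Qed.

Lemma Ex_scale (R : realType) (I T : finType) (mu : T -> R) c (h : {ffun I -> T} -> R) :
  Ex mu (fun x => c * h x) = c * Ex mu h.
Proof. by rewrite /Ex mulr_sumr; apply: eq_bigr => x _; rewrite mulrCA. Qed.

Lemma Ex_const (R : realType) (I T : finType) (mu : T -> R) c :
  \sum_t mu t = 1 -> Ex (I:=I) mu (fun _ => c) = c.
Proof. by move=> h1; rewrite /Ex -mulr_suml sumWt // mul1r. Qed.

Lemma Ex_sum (R : realType) (I T : finType) (mu : T -> R) (V : finType)
   (h : V -> {ffun I -> T} -> R) :
  Ex mu (fun x => \sum_v h v x) = \sum_v Ex mu (h v).
Proof.
rewrite /Ex exchange_big /=; apply: eq_bigr => x _; by rewrite mulr_sumr.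
Qed.

Lemma iid_Ex (R : realType) (n m : nat) (mu : 'I_n -> R) (E : pred {ffun 'I_m -> 'I_n}) :
  iid_prob mu E = Ex mu (fun x => (E x)%:R).
Proof.
rewrite /iid_prob /Ex big_mkcond; apply: eq_bigr => x _.
by case: (E x); rewrite ?mulr1 ?mulr0.
Qed.

Lemma indepF (R : realType) (I T : finType) (mu : T -> R) (J : finType)
    (U : J -> {set I}) (f : J -> {ffun I -> T} -> R) :
  \sum_t mu t = 1 ->
  (forall r r' i, r != r' -> i \in U r -> i \in U r' -> False) ->
  (forall r, depends (f r) (U r)) ->
  Ex mu (fun x => \prod_r f r x) = \prod_r Ex mu (f r).
Proof. by move=> h1 hd hf; apply: indepN => //; [exact: hd | exact: index_enum_uniq]. Qed.

Lemma sum_delta (R : realType) (T : finType) (mu : T -> R) (v : T) :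
  \sum_t mu t * (t == v)%:R = mu v.
Proof.
rewrite (bigD1 v) //= eqxx mulr1 big1 ?addr0 // => t /negbTE ->; by rewrite mulr0.
Qed.


Lemma Ex_prodB (R : realType) (I T : finType) (mu : T -> R) (B : {set I}) (g : T -> R) :
  \sum_t mu t = 1 ->
  Ex mu (fun x => \prod_(i in B) g (x i)) = (\sum_t mu t * g t) ^+ #|B|.
Proof.
move=> h1.
rewrite (@Ex_ext _ _ _ mu _ (fun x => \prod_i (if i \in B then g (x i) else 1))); last first.
  by move=> x; rewrite big_mkcond.
rewrite (Ex_prod mu (fun i t => if i \in B then g t else 1)).
rewrite -prodr_const [RHS]big_mkcond /=; apply: eq_bigr => i _.
by case: (i \in B) => //; under eq_bigr do rewrite mulr1.
Qed.

Lemma ind_ex (R : realType) (I T : finType) (B : {set I}) (x : {ffun I -> T}) (v : T) :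
  ([exists i in B, x i == v])%:R = 1 - \prod_(i in B) ((x i != v)%:R : R).
Proof.
case: (boolP [exists i in B, x i == v]) => [/existsP [i /andP [iB /eqP xi]]|].
  by rewrite (bigD1 i) //= xi eqxx mul0r subr0.
rewrite negb_exists => /forallP h; rewrite big1 ?subrr // => i iB.
by move: (h i); rewrite iB /= => ->.
Qed.

Lemma mu_le1 (R : realType) (T : finType) (mu : T -> R) v :
  (forall t, 0 <= mu t) -> \sum_t mu t = 1 -> mu v <= 1.
Proof.
move=> h0 h1; rewrite -h1 (bigD1 v) //= lerDl; exact: sumr_ge0.
Qed.

Lemma mu_le1_2 (R : realType) (T : finType) (mu : T -> R) v w :
  (forall t, 0 <= mu t) -> \sum_t mu t = 1 -> v != w -> mu v + mu w <= 1.
Proof.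
move=> h0 h1 vw; rewrite -h1 (bigD1 v) //= lerD2l (bigD1 w) /=; last by rewrite eq_sym.
by rewrite lerDl; apply: sumr_ge0.
Qed.

Lemma sum_neq (R : realType) (T : finType) (mu : T -> R) (u : T) :
  \sum_t mu t = 1 -> \sum_t mu t * (t != u)%:R = 1 - mu u.
Proof.
move=> h1; rewrite -[X in X - _]h1 -(sum_delta mu u) -sumrB; apply: eq_bigr => t _.
by case: (t == u) => /=; rewrite ?mulr1 ?mulr0 ?subr0 ?subrr.
Qed.

Definition pin (R : realType) (I T : finType) (B : {set I}) (v : T) (x : {ffun I -> T}) : R :=
  ([exists i in B, x i == v])%:R.

Lemma pin_dep (R : realType) (I T : finType) (B : {set I}) (v : T) :
  depends (pin R B v) B.
Proof.
move=> x y h; rewrite /pin.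
suff -> : [exists i in B, x i == v] = [exists i in B, y i == v] by [].
apply/idP/idP => /existsP [i /andP [iB e]]; apply/existsP; exists i; rewrite iB /=.
  by rewrite -(h i iB).
by rewrite (h i iB).
Qed.

Lemma Ex_pin (R : realType) (I T : finType) (mu : T -> R) (B : {set I}) v :
  \sum_t mu t = 1 ->
  Ex mu (pin R B v) = 1 - (1 - mu v) ^+ #|B|.
Proof.
move=> h1; rewrite (@Ex_ext _ _ _ mu _ (fun x => 1 + (-1) * \prod_(i in B) ((x i != v)%:R)));
  last by move=> x; rewrite /pin ind_ex mulN1r.
rewrite Ex_add Ex_scale Ex_const // (@Ex_prodB _ _ _ mu B (fun t => (t != v)%:R)) // mulN1r.
by rewrite sum_neq.
Qed.

Lemma Ex_pin2 (R : realType) (I T : finType) (mu : T -> R) (B : {set I}) v w :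
  \sum_t mu t = 1 -> v != w ->
  Ex mu (fun x => pin R B v x * pin R B w x) =
  1 - (1 - mu v) ^+ #|B| - (1 - mu w) ^+ #|B| + (1 - mu v - mu w) ^+ #|B|.
Proof.
move=> h1 vw.
rewrite (@Ex_ext _ _ _ mu _ (fun x => (1 + (-1) * \prod_(i in B) ((x i != v)%:R)) +
   ((-1) * \prod_(i in B) ((x i != w)%:R) +
    \prod_(i in B) ((x i != v)%:R * (x i != w)%:R)))); last first.
  move=> x; rewrite /pin !ind_ex big_split /=; ring.
rewrite !Ex_add !Ex_scale Ex_const // (@Ex_prodB _ _ _ mu B (fun t => (t != v)%:R)) //.
rewrite (@Ex_prodB _ _ _ mu B (fun t => (t != w)%:R)) //.
rewrite (@Ex_prodB _ _ _ mu B (fun t => (t != v)%:R * (t != w)%:R)) // !mulN1r.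
rewrite !sum_neq //.
have -> : \sum_t mu t * ((t != v)%:R * (t != w)%:R) = 1 - mu v - mu w.
  rewrite -[X in X - _ - _]h1 -(sum_delta mu v) -(sum_delta mu w) -!sumrB; apply: eq_bigr => t _.
  case: (t =P v) => [->|_]; first by rewrite (negbTE vw) /=; ring.
  by case: (t =P w) => [->|_] /=; ring.
by rewrite !addrA.
Qed.

Definition succ (I T : finType) (q : nat) (B : 'I_q -> {set I}) (x : {ffun I -> T}) : bool :=
  [exists v : T, [forall j : 'I_q, [exists i in B j, x i == v]]].

Lemma prod_pin (R : realType) (I T : finType) (q : nat) (B : 'I_q -> {set I}) (v : T) (x : {ffun I -> T}) :
  \prod_j pin R (B j) v x = ([forall j, [exists i in B j, x i == v]])%:R.
Proof.
case: (boolP [forall j, [exists i in B j, x i == v]]) => [/forallP h | /forallPn [j hj]].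
  by rewrite big1 // => j _; rewrite /pin h.
by rewrite (bigD1 j) //= /pin (negbTE hj) mul0r.
Qed.

Lemma Ex_ge0 (R : realType) (I T : finType) (mu : T -> R) (h : {ffun I -> T} -> R) :
  (forall t, 0 <= mu t) -> (forall x, 0 <= h x) -> 0 <= Ex mu h.
Proof. move=> h0 hh; apply: sumr_ge0 => x _; apply: mulr_ge0 => //; exact: Wt_ge0. Qed.

Lemma geom_bound (R : realType) (a : R) (s : nat) :
  0 <= a <= 1 -> s%:R * (1 - a) * a ^+ s <= 1 - a ^+ s.
Proof.
move=> /andP [a0 a1]; elim: s => [|s IH]; first by rewrite mul0r mul0r expr0 subrr.
have hs : 0 <= a ^+ s by apply: exprn_ge0.
have hs1 : a ^+ s.+1 <= a ^+ s by rewrite exprS; rewrite -[leRHS]mul1r; apply: ler_wpM2r.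
have h1 : s%:R * (1 - a) * a ^+ s.+1 <= s%:R * (1 - a) * a ^+ s.
  by apply: ler_wpM2l => //; apply: mulr_ge0; rewrite ?ler0n ?subr_ge0.
have h2 : (1 - a) * a ^+ s.+1 <= a ^+ s * (1 - a).
  by rewrite mulrC; apply: ler_wpM2r => //; rewrite subr_ge0.
have e : 1 - a ^+ s.+1 = (1 - a ^+ s) + a ^+ s * (1 - a) by rewrite exprS; ring.
rewrite -natr1 !mulrDl !mul1r e; apply: lerD => //; exact: le_trans h1 IH.
Qed.

Lemma sum_delta2 (R : realType) (T : finType) (v : T) (a : R) :
  \sum_w (v == w)%:R * a = a.
Proof.
rewrite (bigD1 v) //= eqxx mul1r big1 ?addr0 // => w wv.
by rewrite eq_sym (negbTE wv) mul0r.
Qed.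

Lemma pin01 (R : realType) (I T : finType) (B : {set I}) (v : T) x :
  pin R B v x * pin R B v x = pin R B v x.
Proof. by rewrite /pin; case: [exists i in B, x i == v]; rewrite ?mulr1 ?mulr0. Qed.

Lemma pin_ge0 (R : realType) (I T : finType) (B : {set I}) (v : T) x :
  0 <= pin R B v x.
Proof. by rewrite /pin ler0n. Qed.

Lemma round (R : realType) (I T : finType) (mu : T -> R) (q s : nat)
    (B : 'I_q -> {set I}) :
  (forall t, 0 <= mu t) -> \sum_t mu t = 1 ->
  (forall j j' i, j != j' -> i \in B j -> i \in B j' -> False) ->
  (forall j, #|B j| = s) ->
  1 <= (2 ^+ q - 1) * ((s%:R / 2) ^+ q * \sum_t mu t ^+ q) ->
  2^-1 ^+ q <= Ex mu (fun x => (succ B x)%:R).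
Proof.
move=> h0 h1 hd hs hyp.
pose p := fun v => 1 - (1 - mu v) ^+ s.
have Ep : forall (v : T) j, Ex mu (pin R (B j) v) = p v by move=> v j; rewrite Ex_pin // hs.
have a01 : forall v : T, 0 <= 1 - mu v <= 1.
  by move=> v; rewrite subr_ge0 mu_le1 //= lerBlDr lerDl h0.
have p0 : forall v : T, 0 <= p v.
  move=> v; rewrite /p subr_ge0; case/andP: (a01 v) => ha hb; exact: exprn_ile1.
have Eall : forall v : T, Ex mu (fun x => \prod_j pin R (B j) v x) = p v ^+ q.
  move=> v; rewrite (@indepF R I T mu 'I_q B (fun j => pin R (B j) v)) //; last first.
    by move=> j; apply: pin_dep.
  by under eq_bigr do rewrite Ep; rewrite prodr_const card_ord.
have succ_ge : forall (v : T) (x : {ffun I -> T}), \prod_j pin R (B j) v x <= (succ B x)%:R.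
  move=> v x; rewrite prod_pin; case: (boolP [forall j, _]) => // hv.
  by have -> : succ B x by apply/existsP; exists v.
case: (boolP [exists v, 2^-1 <= p v]) => [/existsP [v hv] | /existsPn hl].
  apply: (@le_trans _ _ (p v ^+ q)).
    by apply: lerXn2r => //; rewrite nnegrE ?invr_ge0 ?ler0n ?p0.
  rewrite -(Eall v); apply: Ex_le => // x; apply: succ_ge.
pose N := fun x : {ffun I -> T} => \sum_v \prod_j pin R (B j) v x.
pose E1 := \sum_v p v ^+ q.
have E1ge0 : 0 <= E1 by apply: sumr_ge0 => v _; apply: exprn_ge0.
have EN : Ex mu N = E1 by rewrite /N Ex_sum; apply: eq_bigr => v _; exact: Eall.
have EN2 : Ex mu (fun x => N x * N x) <= E1 + E1 * E1.
  have NN : forall x, N x * N x =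
      \sum_v \sum_w \prod_j (pin R (B j) v x * pin R (B j) w x).
    move=> x; rewrite /N mulr_suml; apply: eq_bigr => v _.
    by rewrite mulr_sumr; apply: eq_bigr => w _; rewrite big_split.
  rewrite (@Ex_ext _ _ _ mu _ _ NN) (@Ex_sum _ _ _ mu _ (fun v x => \sum_w \prod_j (pin R (B j) v x * pin R (B j) w x))).
  under eq_bigr do rewrite (@Ex_sum _ _ _ mu _ (fun w x => \prod_j (pin R (B j) _ x * pin R (B j) w x))).
  have term : forall v w : T,
      Ex mu (fun x => \prod_j (pin R (B j) v x * pin R (B j) w x))
        <= (v == w)%:R * p v ^+ q + p v ^+ q * p w ^+ q.
    move=> v w.
    rewrite (@indepF R I T mu 'I_q B (fun j x => pin R (B j) v x * pin R (B j) w x)) //; last first.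
      move=> j x y h /=.
      by rewrite (@pin_dep R I T (B j) v x y h) (@pin_dep R I T (B j) w x y h).
    case: (eqVneq v w) => [<-|vw].
      have e : forall j, Ex mu (fun x => pin R (B j) v x * pin R (B j) v x) = p v.
        by move=> j; rewrite -(Ep v j); apply: Ex_ext => x; apply: pin01.
      under eq_bigr do rewrite e.
      rewrite prodr_const card_ord mul1r lerDl; apply: mulr_ge0; exact: exprn_ge0.
    rewrite mul0r add0r -exprMn.
    apply: (@le_trans _ _ (\prod_(j < q) (p v * p w))); last first.
      by rewrite prodr_const card_ord.
    apply: ler_prod => j _; apply/andP; split.
      by apply: Ex_ge0 => // x; apply: mulr_ge0; apply: pin_ge0.
    rewrite Ex_pin2 // hs /p.
    have c0 : 0 <= 1 - mu v - mu w by have := mu_le1_2 h0 h1 vw; lra.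
    have c1 : 1 - mu v - mu w <= (1 - mu v) * (1 - mu w).
      have := mulr_ge0 (h0 v) (h0 w); lra.
    have := lerXn2r s (x := 1 - mu v - mu w) (y := (1 - mu v) * (1 - mu w)).
    rewrite !nnegrE c0 => /(_ isT) /=.
    have : 0 <= (1 - mu v) * (1 - mu w).
      by case/andP: (a01 v) => ? _; case/andP: (a01 w) => ? _; apply: mulr_ge0.
    move=> hh /(_ hh) /(_ c1); rewrite exprMn => hc; nra.
  apply: (@le_trans _ _ (\sum_v \sum_w ((v == w)%:R * p v ^+ q + p v ^+ q * p w ^+ q))).
    by apply: ler_sum => v _; apply: ler_sum => w _; apply: term.
  rewrite /E1 mulr_suml -big_split /=; apply: ler_sum => v _.
  rewrite big_split /= sum_delta2 -mulr_sumr //.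
have pw : forall (t : R) x, 2 * t * N x - t * t * (N x * N x) <= (succ B x)%:R.
  move=> t x; case: (boolP (succ B x)) => hx /=.
    have := sqr_ge0 (1 - t * N x); rewrite expr2; nra.
  have -> : N x = 0.
    rewrite /N big1 // => v _; rewrite prod_pin.
    move: hx; rewrite /succ negb_exists => /forallP /(_ v) /negbTE -> //.
  by rewrite !mulr0 subrr.
have E1ge : 1 <= (2 ^+ q - 1) * E1.
  have pl : forall v, s%:R / 2 * mu v <= p v.
    move=> v; have := hl v; rewrite -ltNge => plt.
    have := geom_bound s (a01 v); rewrite -/(p v).
    have ha : 2^-1 < (1 - mu v) ^+ s by rewrite /p in plt; lra.
    have hm : 0 <= s%:R * mu v by apply: mulr_ge0; rewrite ?ler0n ?h0.
    have := ler_wpM2l hm (ltW ha).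
    have -> : 1 - (1 - mu v) = mu v by ring.
    move=> h3 h4; apply: le_trans h4; rewrite (mulrC (s%:R) (mu v)) in h3 *.
    apply: le_trans h3; rewrite -mulrA; lra.
  apply: (le_trans hyp); apply: ler_wpM2l.
    by rewrite subr_ge0; apply: exprn_ege1; rewrite ler1n.
  rewrite /E1 mulr_sumr; apply: ler_sum => v _; rewrite -exprMn.
  apply: lerXn2r; rewrite ?nnegrE ?p0 ?pl //.
  by apply: mulr_ge0; rewrite ?h0 // divr_ge0 ?ler0n.
pose t := (1 + E1)^-1.
have E1p : 0 < 1 + E1 by lra.
have t0 : 0 <= t * t by apply: mulr_ge0; rewrite invr_ge0 ltW.
have key : 2 * t * E1 - t * t * (E1 + E1 * E1) <= Ex mu (fun x => (succ B x)%:R).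
  apply: (@le_trans _ _ (Ex mu (fun x => 2 * t * N x - t * t * (N x * N x)))); last first.
    by apply: Ex_le => // x; exact: pw.
  rewrite (@Ex_ext _ _ _ mu _ (fun x => (2 * t) * N x + (- (t * t)) * (N x * N x))); last first.
    by move=> x; ring.
  rewrite Ex_add !Ex_scale EN.
  have := ler_wpM2l t0 EN2; lra.
apply: le_trans key.
have -> : 2 * t * E1 - t * t * (E1 + E1 * E1) = E1 / (1 + E1).
  by rewrite /t; field; rewrite gt_eqF.
have X1 : 1 <= 2 ^+ q :> R by apply: exprn_ege1; rewrite ler1n.
rewrite exprVn ler_pdivlMr // mulrC ler_pdivrMr; last by lra.
nra.
Qed.
Lemma cheb (R : realType) (T : finType) (mu : T -> R) (q : nat) :
  (forall t, 0 <= mu t) -> \sum_t mu t = 1 ->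
  \sum_t mu t ^+ q <= #|T|%:R * \sum_t mu t ^+ q.+1.
Proof.
move=> h0 h1.
pose a := fun v => mu v ^+ q.
have H : 0 <= \sum_(v : T) \sum_(w : T) (a v - a w) * (mu v - mu w).
  apply: sumr_ge0 => v _; apply: sumr_ge0 => w _; rewrite /a.
  case: (lerP (mu v) (mu w)) => hvw.
    apply: mulr_le0; rewrite subr_le0 //; apply: lerXn2r => //; rewrite nnegrE h0 //.
  have hvw' := ltW hvw.
  apply: mulr_ge0; rewrite subr_ge0 //; apply: lerXn2r => //; rewrite nnegrE h0 //.
have e : \sum_(v : T) \sum_(w : T) (a v - a w) * (mu v - mu w) =
   (\sum_(v : T) \sum_(w : T) a v * mu v) - (\sum_(v : T) \sum_(w : T) a v * mu w)
   - (\sum_(v : T) \sum_(w : T) a w * mu v) + (\sum_(v : T) \sum_(w : T) a w * mu w).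
  rewrite -!sumrB -big_split /=; apply: eq_bigr => v _.
  rewrite -!sumrB -big_split /=; apply: eq_bigr => w _; ring.
have e1 : \sum_(v : T) \sum_(w : T) a v * mu v = #|T|%:R * \sum_t mu t ^+ q.+1.
  rewrite mulr_sumr; apply: eq_bigr => v _; rewrite sumr_const.
  by rewrite /a -exprSr mulr_natl.
have e4 : \sum_(v : T) \sum_(w : T) a w * mu w = #|T|%:R * \sum_t mu t ^+ q.+1.
  rewrite sumr_const mulr_natl; congr (_ *+ _); apply: eq_bigr => w _.
  by rewrite /a -exprSr.
have e2 : \sum_(v : T) \sum_(w : T) a v * mu w = \sum_t mu t ^+ q.
  by under eq_bigr do rewrite -mulr_sumr h1 mulr1.
have e3 : \sum_(v : T) \sum_(w : T) a w * mu v = \sum_t mu t ^+ q.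
  rewrite exchange_big /=.
  by under eq_bigr do rewrite -mulr_sumr h1 mulr1.
move: H; rewrite e e1 e2 e3 e4; lra.
Qed.

Lemma powmean (R : realType) (T : finType) (mu : T -> R) (q : nat) :
  (forall t, 0 <= mu t) -> \sum_t mu t = 1 ->
  1 <= #|T|%:R ^+ q * \sum_t mu t ^+ q.+1.
Proof.
move=> h0 h1; elim: q => [|q IH].
  by rewrite expr0 mul1r; under eq_bigr do rewrite expr1; rewrite h1.
apply: (le_trans IH); rewrite exprSr -mulrA; apply: ler_wpM2l.
  by apply: exprn_ge0; apply: ler0n.
exact: cheb.
Qed.

Lemma final_ineq (R : realType) (q k z : nat) (Nq c : R) :
  (1 <= q)%N -> 0 < Nq -> z%:R <= 4 * Nq * k%:R ->
  c <= - (4^-1) * ln (1 - 2^-1 ^+ q) ->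
  (1 - 2^-1 ^+ q) ^+ k <= expR (- (c * z%:R / Nq)).
Proof.
move=> q1 N0 hz hc.
have x0 : 0 <= 2^-1 ^+ q :> R by apply: exprn_ge0; rewrite invr_ge0 ler0n.
have x1 : 2^-1 ^+ q < 1 :> R.
  by rewrite expr_lt1 // ?invr_ge0 ?ler0n // invf_lt1 // ltr1n.
have b0 : 0 < 1 - 2^-1 ^+ q :> R by lra.
pose L : R := ln (1 - 2^-1 ^+ q).
have L0 : L <= 0 by rewrite /L ln_le0 //; lra.
rewrite -/L in hc.
rewrite -[X in X ^+ k](lnK b0) -expRM_natl ler_expR.
set u := z%:R / Nq.
have u0 : 0 <= u by rewrite /u divr_ge0 ?ler0n ?ltW.
have u4 : u <= 4 * k%:R by rewrite /u ler_pdivrMr //; lra.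
have k0 : 0 <= k%:R :> R by apply: ler0n.
rewrite -/L.
have h1 : c * u <= - (4^-1) * L * u by apply: ler_wpM2r.
have h2 : L * (k%:R - u / 4) <= 0.
  by apply: mulr_le0_ge0 => //; lra.
have -> : c * z%:R / Nq = c * u by rewrite /u mulrA.
nra.
Qed.

Lemma c_le (R : realType) (q : nat) : (1 <= q)%N ->
  2^-1 ^+ (q + 2) <= - (4^-1) * ln (1 - 2^-1 ^+ q) :> R.
Proof.
move=> q1.
have x1 : 2^-1 ^+ q < 1 :> R.
  by rewrite expr_lt1 // ?invr_ge0 ?ler0n // invf_lt1 // ltr1n.
have := @le_ln1Dx R (- 2^-1 ^+ q); rewrite ltrN2 => /(_ x1).
rewrite exprD expr2 => h; lra.
Qed.

Lemma card_itv (m a S : nat) : (a + S <= m)%N ->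
  #|[set i : 'I_m | (a <= i < a + S)%N]| = S.
Proof.
move=> hm; rewrite -sum1_card.
rewrite (eq_bigl (fun i : 'I_m => (a <= i < a + S)%N)); last by move=> i; rewrite inE.
rewrite -(big_mkord (fun i => (a <= i < a + S)%N) (fun _ => 1%N)).
rewrite (big_cat_nat _ (n := a)) //=; last by apply: leq_trans hm; apply: leq_addr.
rewrite (big_cat_nat _ (n := a + S) (m := a)) //=; last exact: leq_addr.
rewrite big_nat_cond big1; last by move=> i /andP [/andP [_ ia] /andP [ai _]]; move: ia; rewrite ltnNge ai.
rewrite [X in (_ + (_ + X))%N]big_nat_cond [X in (_ + (_ + X))%N]big1; last first.
  by move=> i /andP [/andP [ai _] /andP [_ ia]]; move: ia; rewrite ltnNge ai.
rewrite big_nat_cond (eq_bigl (fun i => (a <= i < a + S)%N && true)); last first.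
  by move=> i; rewrite andbb andbT.
by rewrite -big_nat_cond sum_nat_const_nat addKn muln1 add0n addn0.
Qed.



Lemma itv_uniq (a b r r' i : nat) :
  (a + r * b <= i < a + r.+1 * b)%N -> (a + r' * b <= i < a + r'.+1 * b)%N -> r = r'.
Proof.
move=> /andP [h1 h2] /andP [h3 h4].
case: (ltngtP r r') => // hr.
  have : (r.+1 * b <= r' * b)%N by rewrite leq_mul2r hr orbT.
  lia.
have : (r'.+1 * b <= r * b)%N by rewrite leq_mul2r hr orbT.
lia.
Qed.

Lemma main_q2 (R : realType) (n : nat) (mu : 'I_n -> R) (q z S : nat) :
  is_prob_measure mu -> (0 < S)%N -> (S <= z)%N ->
  1 <= (2 ^+ q - 1) * ((S%:R / 2) ^+ q * \sum_t mu t ^+ q) ->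
  1 - (1 - 2^-1 ^+ q) ^+ (z %/ S)%N <= iid_prob mu (block_collision (q:=q) (z:=z)).
Proof.
case=> h0 h1 S0 Sz hyp.
set k := (z %/ S)%N.
have kS : (k * S <= z)%N := leq_trunc_div z S.
pose B := fun (r : 'I_k) (j : 'I_q) =>
  [set i : 'I_(q * z) | (j * z + r * S <= i < j * z + r * S + S)%N].
have rS : forall r : 'I_k, (r.+1 * S <= k * S)%N.
  by move=> r; rewrite leq_mul2r ltn_ord orbT.
have jz : forall j : 'I_q, (j.+1 * z <= q * z)%N.
  by move=> j; rewrite leq_mul2r ltn_ord orbT.
have Bin : forall r j (i : 'I_(q * z)), i \in B r j -> (j * z <= i < j.+1 * z)%N.
  move=> r j i; rewrite inE => /andP [h2 h3].
  have := rS r; have := jz j; rewrite !mulSn => *; apply/andP; split; lia.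
have Bin2 : forall r j (i : 'I_(q * z)), i \in B r j ->
    (j * z + r * S <= i < j * z + r.+1 * S)%N.
  by move=> r j i; rewrite inE => /andP [a b]; apply/andP; split; rewrite ?mulSn; lia.
have card : forall r j, #|B r j| = S.
  move=> r j; apply: card_itv; have := rS r; have := jz j; rewrite !mulSn; lia.
have disj_j : forall r j j' i, j != j' -> i \in B r j -> i \in B r j' -> False.
  move=> r j j' i jj' /Bin hj /Bin hj'.
  have := @itv_uniq 0 z j j' i; rewrite !add0n => /(_ hj hj') /val_inj e.
  by move: jj'; rewrite e eqxx.
pose U := fun r : 'I_k => \bigcup_j B r j.
have disj_r : forall r r' i, r != r' -> i \in U r -> i \in U r' -> False.
  move=> r r' i rr' /bigcupP [j _ hj] /bigcupP [j' _ hj'].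
  have e : j = j'.
    apply: val_inj; apply: (@itv_uniq 0 z j j' i); rewrite !add0n;
      [exact: (Bin r j i hj) | exact: (Bin r' j' i hj')].
  move: hj'; rewrite -e => hj'.
  have := @itv_uniq (j * z) S r r' i (Bin2 _ _ _ hj) (Bin2 _ _ _ hj') => /val_inj er.
  by move: rr'; rewrite er eqxx.
have hround : forall r, 2^-1 ^+ q <= Ex mu (fun x => (succ (B r) x)%:R).
  move=> r; apply: (@round R _ _ mu q S (B r)) => //.
    exact: disj_j r.
have succ_bc : forall (r : 'I_k) (x : {ffun 'I_(q * z) -> 'I_n}), succ (B r) x -> block_collision (q:=q) (z:=z) x.
  move=> r x; rewrite /succ => /existsP [v /forallP h].
  have : forall j, exists i, (i \in B r j) && (x i == v).
    by move=> j; have /existsP [i hi] := h j; exists i.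
  case/fin_all_exists => f hf.
  apply/existsP; exists [ffun j => f j]; apply/andP; split.
    by apply/forallP => j; rewrite ffunE; case/andP: (hf j) => /Bin.
  apply/forallP => j; apply/forallP => j'; rewrite !ffunE.
  by case/andP: (hf j) => _ /eqP ->; case/andP: (hf j') => _ /eqP ->.
have dep : forall r : 'I_k, depends (fun x : {ffun 'I_(q * z) -> 'I_n} => 1 - (succ (B r) x)%:R : R) (U r).
  move=> r x y h.
  suff -> : succ (B r) x = succ (B r) y by [].
  have e : forall j i, i \in B r j -> x i = y i.
    by move=> j i hi; apply: h; apply/bigcupP; exists j.
  apply/idP/idP => /existsP [v /forallP hv]; apply/existsP; exists v; apply/forallP => j;
    have /existsP [i /andP [hi xi]] := hv j; apply/existsP; exists i; rewrite hi /=.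
    by rewrite -(e j i hi).
  by rewrite (e j i hi).
have pw : forall x : {ffun 'I_(q * z) -> 'I_n}, 1 - (block_collision (q:=q) (z:=z) x)%:R <= \prod_r (1 - (succ (B r) x)%:R : R).
  move=> x; case: (boolP (block_collision (q:=q) (z:=z) x)) => hx /=.
    rewrite subrr; apply: prodr_ge0 => r _.
    by case: (succ (B r) x); rewrite /= ?subrr ?subr0.
  rewrite subr0 big1 // => r _.
  case: (boolP (succ (B r) x)) => hs; last by rewrite subr0.
  by move: hx; rewrite (succ_bc r x hs).
rewrite iid_Ex lerBlDr -lerBlDl.
have -> : 1 - Ex mu (fun x => (block_collision (q:=q) (z:=z) x)%:R) =
          Ex mu (fun x => 1 - (block_collision (q:=q) (z:=z) x)%:R).
  rewrite (@Ex_ext _ _ _ mu (fun x => 1 - (block_collision (q:=q) (z:=z) x)%:R)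
     (fun x => 1 + (-1) * (block_collision (q:=q) (z:=z) x)%:R)).
    by rewrite Ex_add Ex_scale Ex_const // mulN1r.
  by move=> x; rewrite mulN1r.
apply: (le_trans (Ex_le h0 pw)).
rewrite (@indepF R _ _ mu _ U (fun r x => 1 - (succ (B r) x)%:R)) //.
apply: (@le_trans _ _ (\prod_(r < k) (1 - 2^-1 ^+ q))); last by rewrite prodr_const card_ord.
apply: ler_prod => r _; apply/andP; split.
  rewrite (@Ex_ext _ _ _ mu (fun x => 1 - (succ (B r) x)%:R) (fun x => 1 + (-1) * (succ (B r) x)%:R)); last first.
    by move=> x; rewrite mulN1r.
  rewrite Ex_add Ex_scale Ex_const // mulN1r subr_ge0.
  rewrite -[leRHS](@Ex_const R 'I_(q * z) _ mu 1) //; apply: Ex_le => // x.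
  by case: (succ _ _).
rewrite (@Ex_ext _ _ _ mu (fun x => 1 - (succ (B r) x)%:R) (fun x => 1 + (-1) * (succ (B r) x)%:R)); last first.
  by move=> x; rewrite mulN1r.
rewrite Ex_add Ex_scale Ex_const // mulN1r lerD2l lerN2; exact: hround.
Qed.

Lemma two_thirds (R : realType) (q : nat) : (2 <= q)%N ->
  1 <= (2 ^+ q - 1) * ((2 / 3) ^+ q) :> R.
Proof.
case: q => [|[|m]] // _; elim: m => [|m IH].
  rewrite !expr2; lra.
have X0 : 0 <= 2 ^+ m.+2 :> R by apply: exprn_ge0; lra.
have Y0 : 0 <= (2 / 3) ^+ m.+2 :> R by apply: exprn_ge0; lra.
apply: (le_trans IH); rewrite [X in _ <= (X - 1) * _]exprS [X in _ <= _ * X]exprS.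
nra.
Qed.

Lemma prob_one (R : realType) (n : nat) (mu : 'I_n -> R) (q z : nat) :
  is_prob_measure mu -> (q <= 1)%N -> (q = 1 -> 0 < z)%N ->
  iid_prob mu (block_collision (q:=q) (z:=z)) = 1.
Proof.
case=> h0 h1 q1 hz.
rewrite iid_Ex (@Ex_ext _ _ _ mu _ (fun _ => 1)) ?Ex_const // => x.
suff -> : block_collision (q:=q) (z:=z) x by [].
case: q q1 hz x => [|[|//]] _ hz x.
  apply/existsP; exists [ffun j => cast_ord (esym (mul0n z)) j].
  by apply/andP; split; apply/forallP => -[].
have z0 : (0 < 1 * z)%N by rewrite mul1n; apply: hz.
apply/existsP; exists [ffun j => Ordinal z0]; apply/andP; split.
  by apply/forallP => j; rewrite ffunE /= (ord1 j) /=.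
by apply/forallP => j; apply/forallP => j'; rewrite !ffunE.
Qed.

Theorem lemma2p3 (R : realType) (n : nat) (mu : 'I_n -> R) (q z : nat) :
  is_prob_measure mu ->
  2 * (n%:R `^ (1 - q%:R^-1)) <= z%:R :> R ->
  (forall c : R, c <= - (4^-1) * ln (1 - 2^-1 ^+ q) ->
     1 - expR (- (c * z%:R / (n%:R `^ (1 - q%:R^-1))))
       <= iid_prob mu (block_collision (q:=q) (z:=z))) /\
  (forall c : R, c <= 2^-1 ^+ (q + 2) ->
     1 - expR (- (c * z%:R / (n%:R `^ (1 - q%:R^-1))))
       <= iid_prob mu (block_collision (q:=q) (z:=z))).
Proof.
move=> hmu hz; have [h0 h1] := hmu.
have n0 : (0 < n)%N.
  rewrite lt0n; apply/negP => /eqP n00.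
  move: h1; rewrite big1 => [/esym/eqP|k _]; first by rewrite oner_eq0.
  by have := ltn_ord k; rewrite {2}n00.
have n1 : 1 <= n%:R :> R by rewrite ler1n.
case: (leqP q 1) => [q1 | q2].
  have hp : iid_prob mu (block_collision (q:=q) (z:=z)) = 1.
    apply: prob_one => // eq1; move: hz; rewrite eq1 invr1 subrr powRr0 mulr1.
    by rewrite (ler_nat R 2 z) => /(leq_trans _); apply.
  rewrite hp; split => c _; rewrite lerBlDr lerDl; exact: ltW (expR_gt0 _).
set Nq := n%:R `^ (1 - q%:R^-1).
rewrite -/Nq in hz.
have q0 : (0 < q)%N by apply: leq_trans q2.
have e0 : 0 <= 1 - q%:R^-1 :> R.
  by rewrite subr_ge0 invf_le1 ?ler1n ?ltr0n.
have Nq1 : 1 <= Nq.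
  by have := @ler_powR _ n%:R n1 0 (1 - q%:R^-1) e0; rewrite powRr0.
have Nq0 : 0 < Nq by lra.
have Nqq : Nq ^+ q = n%:R ^+ q.-1.
  rewrite -powR_mulrn ?ltW // /Nq -powRrM -powR_mulrn ?ler0n //; congr (_ `^ _).
  rewrite mulrBl mul1r mulVf ?pnatr_eq0 -?lt0n // -subn1 natrB //.
pose S := (Num.truncn (4 / 3 * Nq)).+1.
have x0 : 0 <= 4 / 3 * Nq by lra.
have hS1 : 4 / 3 * Nq < S%:R by apply: truncnS_gt.
have hS2 : S%:R <= 4 / 3 * Nq + 1.
  by rewrite /S -natr1 lerD2r truncn_le.
have Sz : (S <= z)%N.
  by rewrite /S truncn_lt_nat //; lra.
have S0 : (0 < S)%N by [].
pose k := (z %/ S)%N.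
have k1 : (1 <= k)%N by rewrite /k divn_gt0.
have zk : (z < k.+1 * S)%N by apply: ltn_ceil.
have hz4 : z%:R <= 4 * Nq * k%:R.
  have : (z.+1 <= k.+1 * S)%N by [].
  rewrite -(ler_nat R) natrM -[k.+1%:R]natr1 -[z.+1%:R]natr1 => hh.
  have k1' : 1 <= k%:R :> R by rewrite ler1n.
  have : (k%:R + 1) * S%:R <= (k%:R + 1) * (4 / 3 * Nq + 1).
    by apply: ler_wpM2l => //; lra.
  nra.
have hyp : 1 <= (2 ^+ q - 1) * ((S%:R / 2) ^+ q * \sum_t mu t ^+ q).
  have pm : 1 <= n%:R ^+ q.-1 * \sum_t mu t ^+ q.
    by have := @powmean R _ mu q.-1 h0 h1; rewrite card_ord prednK.
  have tt := two_thirds R q2.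
  have hSq : (2 / 3) ^+ q * n%:R ^+ q.-1 <= (S%:R / 2) ^+ q :> R.
    rewrite -Nqq -exprMn; apply: lerXn2r; rewrite ?nnegrE; lra.
  have hX : 0 <= 2 ^+ q - 1 :> R by rewrite subr_ge0 exprn_ege1 // ler1n.
  have hD : 0 <= \sum_t mu t ^+ q by apply: sumr_ge0 => t _; apply: exprn_ge0.
  have hh := ler_pM ler01 ler01 tt pm; rewrite mulr1 in hh.
  apply: (le_trans hh).
  have -> : (2 ^+ q - 1) * (2 / 3) ^+ q * (n%:R ^+ q.-1 * \sum_t mu t ^+ q) =
     (2 ^+ q - 1) * ((2 / 3) ^+ q * n%:R ^+ q.-1 * \sum_t mu t ^+ q) by ring.
  by apply: ler_wpM2l => //; apply: ler_wpM2r.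
have main := main_q2 hmu S0 Sz hyp.
have p1 : forall c : R, c <= - (4^-1) * ln (1 - 2^-1 ^+ q) ->
     1 - expR (- (c * z%:R / Nq)) <= iid_prob mu (block_collision (q:=q) (z:=z)).
  move=> c hc; apply: le_trans main; rewrite lerD2l lerN2.
  by apply: final_ineq => //; apply: ltnW.
split => //.
move=> c hc; apply: p1; apply: le_trans hc _; apply: c_le; exact: ltnW.
Qed.
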